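(* Let $M$ and $N$ be objects of an abelian category $\mathcal{A}$, let $M'$ be a direct summand of $M$ and $N'$ a direct summand of $N$. (1) If $N$ is strongly $M$-Rickart, then $N'$ is strongly $M'$-Rickart. (2) If $N$ is dual strongly $M$-Rickart, then $N'$ is dual strongly $M'$-Rickart.
   Context: A morphism $f:X\to Y$ is a section if $f'f=1_X$ for some $f'$, a retraction if $ff'=1_Y$ for some $f'$. A monomorphism $k:K\to X$ is fully invariant if for every $h:X\to X$ there is $\alpha:K\to K$ with $hk=k\alpha$; an epimorphism $c:X\to C$ is fully coinvariant if for every $h:X\to X$ there is $\gamma:C\to C$ with $ch=\gamma c$. For objects $M,N$: $N$ is strongly $M$-Rickart if the kernel of every morphism $f:M\to N$ is a fully invariant section; $N$ is dual strongly $M$-Rickart if the cokernel of every morphism $f:M\to N$ is a fully coinvariant retraction. *)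

(* Defs.v *)
From HB Require Import structures.
From mathcomp Require Import all_boot all_algebra.
Set Implicit Arguments. Unset Strict Implicit. Unset Printing Implicit Defensive.
Import GRing.Theory.
Local Open Scope ring_scope.

(* Preadditive category: hom-sets are abelian groups, composition is bilinear.
   [comp g f] is the composite "g f" (first f, then g). *)
Record PreaddCat := {
  Ob :> Type;
  Hom : Ob -> Ob -> zmodType;
  comp : forall X Y Z : Ob, Hom Y Z -> Hom X Y -> Hom X Z;
  idm : forall X : Ob, Hom X X;
  compA : forall X Y Z W (h : Hom Z W) (g : Hom Y Z) (f : Hom X Y),
      comp h (comp g f) = comp (comp h g) f;
  comp1m : forall X Y (f : Hom X Y), comp (idm Y) f = f;
  compm1 : forall X Y (f : Hom X Y), comp f (idm X) = f;
  compDl : forall X Y Z (g g' : Hom Y Z) (f : Hom X Y),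
      comp (g + g') f = comp g f + comp g' f;
  compDr : forall X Y Z (g : Hom Y Z) (f f' : Hom X Y),
      comp g (f + f') = comp g f + comp g f'
}.
Arguments comp {p X Y Z}.
Arguments idm {p}.

Section Defs.
Variable C : PreaddCat.

Definition mono {X Y : C} (f : Hom X Y) :=
  forall Z (g h : Hom Z X), comp f g = comp f h -> g = h.
Definition epi {X Y : C} (f : Hom X Y) :=
  forall Z (g h : Hom Y Z), comp g f = comp h f -> g = h.

Definition section {X Y : C} (f : Hom X Y) := exists f' : Hom Y X, comp f' f = idm X.
Definition retraction {X Y : C} (f : Hom X Y) := exists f' : Hom Y X, comp f f' = idm Y.

Definition is_kernel {X Y K : C} (f : Hom X Y) (k : Hom K X) :=
  comp f k = 0 /\
  forall Z (g : Hom Z X), comp f g = 0 -> exists! u : Hom Z K, comp k u = g.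
Definition is_cokernel {X Y Q : C} (f : Hom X Y) (c : Hom Y Q) :=
  comp c f = 0 /\
  forall Z (g : Hom Y Z), comp g f = 0 -> exists! u : Hom Q Z, comp u c = g.

Definition is_zero_object (Z : C) :=
  (forall X (f : Hom Z X), f = 0) /\ (forall X (f : Hom X Z), f = 0).

Definition is_biproduct {X Y S : C} (i1 : Hom X S) (i2 : Hom Y S)
  (p1 : Hom S X) (p2 : Hom S Y) :=
  [/\ comp p1 i1 = idm X, comp p2 i2 = idm Y, comp p1 i2 = 0, comp p2 i1 = 0
    & comp i1 p1 + comp i2 p2 = idm S].

Definition abelian :=
  (exists Z : C, is_zero_object Z) /\
  [/\ 
(forall X Y : C, exists S (i1 : Hom X S) (i2 : Hom Y S) p1 p2,
        is_biproduct i1 i2 p1 p2),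
      (forall (X Y : C) (f : Hom X Y), exists K (k : Hom K X), is_kernel f k),
      (forall (X Y : C) (f : Hom X Y), exists Q (c : Hom Y Q), is_cokernel f c),
      (forall (X Y : C) (f : Hom X Y), mono f -> exists Z (g : Hom Y Z), is_kernel g f)
    & (forall (X Y : C) (f : Hom X Y), epi f -> exists Z (g : Hom Z X), is_cokernel g f)].

Definition direct_summand (M' M : C) :=
  exists (M'' : C) (i1 : Hom M' M) (i2 : Hom M'' M) p1 p2, is_biproduct i1 i2 p1 p2.

Definition fully_invariant {K X : C} (k : Hom K X) :=
  mono k /\ forall h : Hom X X, exists a : Hom K K, comp h k = comp k a.
Definition fully_coinvariant {X Q : C} (c : Hom X Q) :=
  epi c /\ forall h : Hom X X, exists g : Hom Q Q, comp c h = comp g c.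

(* N is strongly M-Rickart: the kernel of every f : M -> N is a fully invariant section *)
Definition strongly_rickart (M N : C) :=
  forall (f : Hom M N) (K : C) (k : Hom K M), is_kernel f k ->
    fully_invariant k /\ section k.
(* N is dual strongly M-Rickart: the cokernel of every f : M -> N is a fully
   coinvariant retraction *)
Definition dual_strongly_rickart (M N : C) :=
  forall (f : Hom M N) (Q : C) (c : Hom N Q), is_cokernel f c ->
    fully_coinvariant c /\ retraction c.
End Defs.

(* Main.v *)
Require Import Defs.
From mathcomp Require Import all_boot all_algebra.
Set Implicit Arguments.
Import GRing.Theory.
Local Open Scope ring_scope.

Local Notation cmp := Defs.comp.
Local Notation HH := Defs.Hom.
Local Notation compA := Defs.compA.
Local Notation comp1m := Defs.comp1m.
Local Notation compm1 := Defs.compm1.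
Local Notation idm := Defs.idm.

Lemma comp0m (C : PreaddCat) (X Y Z : C) (f : HH X Y) :
  cmp (0 : HH Y Z) f = 0.
Proof.
have H := compDl (0 : HH Y Z) 0 f; rewrite addr0 in H.
by apply/eqP; rewrite -(subrr (cmp 0 f)) {2}H addrK.
Qed.

Lemma compm0 (C : PreaddCat) (X Y Z : C) (g : HH Y Z) :
  cmp g (0 : HH X Y) = 0.
Proof.
have H := compDr g (0 : HH X Y) 0; rewrite addr0 in H.
by apply/eqP; rewrite -(subrr (cmp g 0)) {2}H addrK.
Qed.

Lemma kernel_mono (C : PreaddCat) (X Y K : C) (f : HH X Y) (k : HH K X) :
  is_kernel f k -> mono k.
Proof.
move=> [Hk0 Hk] Z g h E.
have H0 : cmp f (cmp k g) = 0 by rewrite compA Hk0 comp0m.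
have [u [_ Hu]] := Hk Z _ H0.
by rewrite -(Hu g erefl) (Hu h (esym E)).
Qed.

Lemma cokernel_epi (C : PreaddCat) (X Y Q : C) (f : HH X Y) (c : HH Y Q) :
  is_cokernel f c -> epi c.
Proof.
move=> [Hc0 Hc] Z g h E.
have H0 : cmp (cmp g c) f = 0 by rewrite -compA Hc0 compm0.
have [u [_ Hu]] := Hc Z _ H0.
by rewrite -(Hu g erefl) (Hu h (esym E)).
Qed.

Theorem corollary2p18 (C : PreaddCat) (HC : abelian C) (M N M' N' : C) :
  direct_summand M' M -> direct_summand N' N ->
  (strongly_rickart M N -> strongly_rickart M' N') /\
  (dual_strongly_rickart M N -> dual_strongly_rickart M' N').
Proof.
move=> [M'' [i1 [i2 [p1 [p2 [Hp1i1 _ _ _ _]]]]]].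
move=> [N'' [j1 [j2 [q1 [q2 [Hq1j1 _ _ _ _]]]]]].
have [_ [_ Hker Hcok _ _]] := HC.
split.
- move=> SR f' K k' Hk'.
  have k'mono := kernel_mono Hk'.
  set f := cmp j1 (cmp f' p1).
  have [K0 [k Hk]] := Hker _ _ f.
  have [[_ Hinv] [r Hr]] := SR f K0 k Hk.
  have H1 : cmp f (cmp i1 k') = 0.
    by rewrite /f -!compA (compA p1) Hp1i1 comp1m Hk'.1 compm0.
  have [u [Hu _]] := Hk.2 _ _ H1.
  have H2 : cmp f' (cmp p1 k) = 0.
    have := f_equal (cmp q1) Hk.1.
    by rewrite compm0 /f -!compA (compA q1) Hq1j1 comp1m.
  have [v [Hv _]] := Hk'.2 _ _ H2.
  have Hvu : cmp v u = idm K.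
    apply: k'mono; rewrite compA Hv -compA Hu compA Hp1i1 comp1m compm1 //.
  split; [split=> // h|].
  + have [a Ha] := Hinv (cmp i1 (cmp h p1)).
    exists (cmp v (cmp a u)).
    rewrite compA Hv -compA (compA k a u) -Ha.
    idtac.
    by rewrite -!compA Hu (compA p1 i1) Hp1i1 comp1m (compA p1 i1) Hp1i1 comp1m.
  + exists (cmp v (cmp r i1)).
    by rewrite -!compA -Hu (compA r) Hr comp1m.
- move=> SR f' Q c' Hc'.
  have c'epi := cokernel_epi Hc'.
  set f := cmp j1 (cmp f' p1).
  have [Q0 [c Hc]] := Hcok _ _ f.
  have [[_ Hinv] [s Hs]] := SR f Q0 c Hc.
  have H1 : cmp (cmp c j1) f' = 0.
    have := f_equal (fun x => cmp x i1) Hc.1.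
    by rewrite comp0m /f -!compA Hp1i1 compm1 !compA.
  have [u [Hu _]] := Hc'.2 _ _ H1.
  have H2 : cmp (cmp c' q1) f = 0.
    by rewrite /f !compA -(compA c') Hq1j1 compm1 Hc'.1 comp0m.
  have [v [Hv _]] := Hc.2 _ _ H2.
  have Hvu : cmp v u = idm Q.
    apply: c'epi; rewrite -compA Hu compA Hv -compA Hq1j1 compm1 comp1m //.
  split; [split=> // h|].
  + have [g Hg] := Hinv (cmp j1 (cmp h q1)).
    exists (cmp v (cmp g u)).
    rewrite -!compA Hu (compA g) -Hg -!compA Hq1j1 compm1 !compA Hv.
    by rewrite -(compA c') Hq1j1 compm1.
  + exists (cmp q1 (cmp s u)).
    by rewrite compA -Hv -compA (compA c s) Hs comp1m.
Qed.
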